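(* Let $K\ge 1$, $N_t,N_r,N_d\ge1$ be integers, $\sigma_0^2>0$, $P_{\rm BS}>0$, and weights $\omega_1,\dots,\omega_K>0$ with $\sum_k\omega_k=1$. Let $\mathbf{H}_k\in\mathbb{C}^{N_r\times N_t}$ ($k=1,\dots,K$), $\mathbf{H}=[\mathbf{H}_1^{\mathsf T},\dots,\mathbf{H}_K^{\mathsf T}]^{\mathsf T}\in\mathbb{C}^{KN_r\times N_t}$, $\bar{\mathbf{H}}=\mathbf{H}\mathbf{H}^{\mathsf H}\in\mathbb{C}^{KN_r\times KN_r}$ and $\bar{\mathbf{H}}_k=\mathbf{H}_k\mathbf{H}^{\mathsf H}\in\mathbb{C}^{N_r\times KN_r}$. Fix a point $\mathbf{F}^{(n)}=[\mathbf{F}^{(n)}_1,\dots,\mathbf{F}^{(n)}_K]$ with $\mathbf{F}^{(n)}_k\in\mathbb{C}^{KN_r\times N_d}$ and define $\hat{\mathbf{X}}_k=\bar{\mathbf{H}}_k\mathbf{F}_k^{(n)}$, $$\hat{\mathbf{Y}}_k=\sum_{j\neq k}\bar{\mathbf{H}}_k\mathbf{F}_j^{(n)}(\mathbf{F}_j^{(n)})^{\mathsf H}\bar{\mathbf{H}}_k^{\mathsf H}+\frac{\sigma_0^2}{P_{\rm BS}}\sum_{i=1}^K\mathrm{Tr}\big(\bar{\mathbf{H}}\mathbf{F}_i^{(n)}(\mathbf{F}_i^{(n)})^{\mathsf H}\big)\mathbf{I},$$ assumed invertible, $\hat{\mathbf{B}}_k=\hat{\mathbf{X}}_k^{\mathsf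 H}\hat{\mathbf{Y}}_k^{-1}$ and $\hat{\mathbf{A}}_k=\hat{\mathbf{Y}}_k^{-1}-(\hat{\mathbf{X}}_k\hat{\mathbf{X}}_k^{\mathsf H}+\hat{\mathbf{Y}}_k)^{-1}$. For $\mathbf{F}=[\mathbf{F}_1,\dots,\mathbf{F}_K]$, $\mathbf{F}_k\in\mathbb{C}^{KN_r\times N_d}$, define $$g_k(\mathbf{F})=\log\det(\mathbf{I}+\hat{\mathbf{B}}_k\hat{\mathbf{X}}_k)-\mathrm{Tr}(\hat{\mathbf{B}}_k\hat{\mathbf{X}}_k)+2\Re\{\mathrm{Tr}(\hat{\mathbf{B}}_k\bar{\mathbf{H}}_k\mathbf{F}_k)\}-\sum_{j=1}^K\mathrm{Tr}(\mathbf{F}_j^{\mathsf H}\bar{\mathbf{H}}_k^{\mathsf H}\hat{\mathbf{A}}_k^{\mathsf H}\bar{\mathbf{H}}_k\mathbf{F}_j)-\frac{\sigma_0^2}{P_{\rm BS}}\mathrm{Tr}(\hat{\mathbf{A}}_k^{\mathsf H})\sum_{i=1}^K\mathrm{Tr}(\bar{\mathbf{H}}\mathbf{F}_i\mathbf{F}_i^{\mathsf H}).$$ Then the closed-form solution of $\max_{\mathbf{F}}\sum_{k=1}^K\omega_k g_k(\mathbf{F})$ is $$\mathbf{F}=(\mu\mathbf{I}+\tilde{\mathbf{A}}\bar{\mathbf{H}})^{-1}\tilde{\mathbf{B}},$$ where $\tilde{\mathbf{A}}=\mathrm{blkdiag}(\omega_1\hat{\mathbf{A}}_1^{\mathsf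 H},\dots,\omega_K\hat{\mathbf{A}}_K^{\mathsf H})$, $\tilde{\mathbf{B}}=\mathrm{blkdiag}(\omega_1\hat{\mathbf{B}}_1^{\mathsf H},\dots,\omega_K\hat{\mathbf{B}}_K^{\mathsf H})$ and $\mu=\frac{\sigma_0^2}{P_{\rm BS}}\sum_{k=1}^K\omega_k\mathrm{Tr}(\hat{\mathbf{A}}_k^{\mathsf H})$.
   Context: This is the precoder-update subproblem of successive convex approximation for weighted sum-rate maximization in a downlink multiuser MIMO system (with RIS phase shifts fixed), where $\mathbf{H}_k$ is the composite channel to user $k$. $\mathrm{blkdiag}$ denotes the block-diagonal matrix with the given diagonal blocks; $\log$ is the natural logarithm; $^{\mathsf H}$ is conjugate transpose. *)

(* Defs.v *)
From HB Require Import structures.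
From mathcomp Require Import all_boot all_order all_algebra.
From mathcomp Require Import complex.
From mathcomp Require Import all_classical all_reals all_analysis.
Set Implicit Arguments. Unset Strict Implicit. Unset Printing Implicit Defensive.
Import Order.TTheory GRing.Theory Num.Theory.
Local Open Scope ring_scope.

Definition adjmx (R : rcfType) m n (A : 'M[R[i]]_(m, n)) : 'M[R[i]]_(n, m) :=
  (map_mx (@conjc R) A)^T.

Section Precoder.
Variables (R : realType) (K Nt Nr Nd : nat).
Local Notation C := (R[i]).
Local Notation KNr := (\sum_(k < K) Nr)%N.
Local Notation KNd := (\sum_(k < K) Nd)%N.
Variables (sigma2 PBS : R) (omega : 'I_K -> R) (Hk : 'I_K -> 'M[C]_(Nr, Nt))
  (F0 : 'I_K -> 'M[C]_(KNr, Nd)).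

Definition Hstack : 'M[C]_(KNr, Nt) := \mxcol_(k < K) Hk k.
Definition Hbar : 'M[C]_KNr := Hstack *m adjmx Hstack.
Definition Hbar_k (k : 'I_K) : 'M[C]_(Nr, KNr) := Hk k *m adjmx Hstack.

Definition rho : C := (sigma2 / PBS)%:C%C.

Definition Xhat (k : 'I_K) : 'M[C]_(Nr, Nd) := Hbar_k k *m F0 k.
Definition Yhat (k : 'I_K) : 'M[C]_Nr :=
  \sum_(j < K | j != k) (Hbar_k k *m F0 j *m adjmx (F0 j) *m adjmx (Hbar_k k))
  + (rho * \sum_(i < K) \tr (Hbar *m F0 i *m adjmx (F0 i)))%:M.
Definition Bhat (k : 'I_K) : 'M[C]_(Nd, Nr) := adjmx (Xhat k) *m invmx (Yhat k).
Definition Ahat (k : 'I_K) : 'M[C]_Nr :=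
  invmx (Yhat k) - invmx (Xhat k *m adjmx (Xhat k) + Yhat k).

(* g_k(F); the log-det is the real log of the (real, positive) determinant,
   and the remaining (real-valued) terms are taken through their real part. *)
Definition g_k (k : 'I_K) (F : 'I_K -> 'M[C]_(KNr, Nd)) : R :=
  ln (complex.Re (\det (1%:M + Bhat k *m Xhat k)))
  + complex.Re (- \tr (Bhat k *m Xhat k)
     + (2 * complex.Re (\tr (Bhat k *m Hbar_k k *m F k)))%:C%C
     - \sum_(j < K) \tr (adjmx (F j) *m adjmx (Hbar_k k) *m adjmx (Ahat k)
                          *m Hbar_k k *m F j)
     - rho * \tr (adjmx (Ahat k)) * \sum_(i < K) \tr (Hbar *m F i *m adjmx (F i))).

Definition objective (F : 'I_K -> 'M[C]_(KNr, Nd)) : R :=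
  \sum_(k < K) omega k * g_k k F.

Definition Atilde : 'M[C]_KNr :=
  \mxblock_(i < K, j < K) (if i == j then (omega i)%:C%C *: adjmx (Ahat i) else 0 : 'M[C]_(Nr, Nr)).
Definition Btilde : 'M[C]_(KNr, KNd) :=
  \mxblock_(i < K, j < K) (if i == j then (omega i)%:C%C *: adjmx (Bhat i) else 0 : 'M[C]_(Nr, Nd)).
Definition mu : C := rho * \sum_(k < K) (omega k)%:C%C * \tr (adjmx (Ahat k)).

Definition Fopt : 'M[C]_(KNr, KNd) := invmx (mu%:M + Atilde *m Hbar) *m Btilde.
Definition Fopt_blocks (k : 'I_K) : 'M[C]_(KNr, Nd) := submxrow Fopt k.
End Precoder.

(* Main.v *)
Require Import Defs.
From HB Require Import structures.
From mathcomp Require Import all_boot all_order all_algebra.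
From mathcomp Require Import complex.
From mathcomp Require Import all_classical all_reals all_analysis.
From mathcomp Require Import ring lra.
Import Order.TTheory GRing.Theory Num.Theory.
Local Open Scope ring_scope.
Section Adj.
Variable R : rcfType.
Local Notation C := R[i].

Lemma adjmxK m n (A : 'M[C]_(m,n)) : adjmx (adjmx A) = A.
Proof. by apply/matrixP=> i j; rewrite !mxE conjcK. Qed.

Lemma adjmxM m n p (A : 'M[C]_(m,n)) (B : 'M[C]_(n,p)) :
  adjmx (A *m B) = adjmx B *m adjmx A.
Proof. by rewrite /adjmx map_mxM trmx_mul. Qed.

Lemma adjmxD m n (A B : 'M[C]_(m,n)) : adjmx (A + B) = adjmx A + adjmx B.
Proof. by apply/matrixP=> i j; rewrite !mxE rmorphD. Qed.

Lemma adjmxN m n (A : 'M[C]_(m,n)) : adjmx (- A) = - adjmx A.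
Proof. by apply/matrixP=> i j; rewrite !mxE rmorphN. Qed.

Lemma adjmxB m n (A B : 'M[C]_(m,n)) : adjmx (A - B) = adjmx A - adjmx B.
Proof. by rewrite adjmxD adjmxN. Qed.

Lemma adjmx0 m n : adjmx (0 : 'M[C]_(m,n)) = 0.
Proof. by apply/matrixP=> i j; rewrite !mxE rmorph0. Qed.

Lemma adjmx_sum m n (I : finType) (P : pred I) (F : I -> 'M[C]_(m,n)) :
  adjmx (\sum_(i | P i) F i) = \sum_(i | P i) adjmx (F i).
Proof.
exact: (big_morph _ (@adjmxD m n) (adjmx0 m n)).
Qed.

Lemma adjmxZ m n a (A : 'M[C]_(m,n)) : adjmx (a *: A) = (a^*)%C *: adjmx A.
Proof. by apply/matrixP=> i j; rewrite !mxE rmorphM. Qed.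

Lemma adjmx_scalar n a : adjmx (a%:M : 'M[C]_n) = ((a^*)%C)%:M.
Proof.
by apply/matrixP=> i j; rewrite !mxE eq_sym rmorphMn.
Qed.

Lemma adjmx1 n : adjmx (1%:M : 'M[C]_n) = 1%:M.
Proof. by rewrite adjmx_scalar rmorph1. Qed.

Lemma adjmx_inv n (A : 'M[C]_n) : adjmx (invmx A) = invmx (adjmx A).
Proof. by rewrite /adjmx map_invmx trmx_inv. Qed.

Lemma tr_adjmx n (A : 'M[C]_n) : \tr (adjmx A) = ((\tr A)^*)%C.
Proof. by rewrite /adjmx mxtrace_tr /mxtrace rmorph_sum; apply: eq_bigr=> i _; rewrite mxE. Qed.

Lemma tr_gram_ge0 m n (D : 'M[C]_(m,n)) : 0 <= \tr (adjmx D *m D).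
Proof.
rewrite /mxtrace; apply: sumr_ge0 => i _; rewrite mxE; apply: sumr_ge0 => k _.
by rewrite !mxE mulrC mulcJ_ge0.
Qed.

Lemma tr_gram_eq0 m n (D : 'M[C]_(m,n)) : \tr (adjmx D *m D) = 0 -> D = 0.
Proof.
rewrite /mxtrace => /eqP; rewrite psumr_eq0 => [/allP H|i _]; last first.
  rewrite mxE; apply: sumr_ge0 => k _; by rewrite !mxE mulrC mulcJ_ge0.
apply/matrixP => k i; have := H i (mem_index_enum i); rewrite implyTb mxE psumr_eq0.
  move=> /allP /(_ k (mem_index_enum k)); rewrite implyTb !mxE mulf_eq0 conjc_eq0 orbb.
  by move/eqP->.
by move=> l _; rewrite !mxE mulrC mulcJ_ge0.
Qed.

Lemma unitmx_ker n (A : 'M[C]_n) :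
  (forall v : 'cV[C]_n, A *m v = 0 -> v = 0) -> A \in unitmx.
Proof.
move=> H; rewrite -unitmx_tr unitmxE unitfE; apply/negP => /det0P [v nz vA].
have : A *m v^T = 0 by rewrite -(trmxK A) -trmx_mul vA trmx0.
move/H => /(congr1 trmx); rewrite trmxK trmx0 => v0.
by rewrite v0 eqxx in nz.
Qed.

End Adj.
Section PSD.
Variable R : rcfType.
Local Notation C := R[i].

Definition psd n (P : 'M[C]_n) :=
  forall m (D : 'M[C]_(n,m)), 0 <= \tr (adjmx D *m P *m D).
Arguments psd {n}.

Lemma psd_gram n p (E : 'M[C]_(n,p)) : psd (E *m adjmx E).
Proof.
move=> m D.
have -> : adjmx D *m (E *m adjmx E) *m D = adjmx (adjmx E *m D) *m (adjmx E *m D).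
  by rewrite adjmxM adjmxK !mulmxA.
exact: tr_gram_ge0.
Qed.

Lemma psd1 n : psd (1%:M : 'M[C]_n).
Proof. by move=> m D; rewrite mulmx1 tr_gram_ge0. Qed.

Lemma psd0 n : psd (0 : 'M[C]_n).
Proof. by move=> m D; rewrite mulmx0 mul0mx mxtrace0. Qed.

Lemma psd_conj n p (E : 'M[C]_(p,n)) P : psd P -> psd (adjmx E *m P *m E).
Proof.
move=> hP m D.
have -> : adjmx D *m (adjmx E *m P *m E) *m D = adjmx (E *m D) *m P *m (E *m D).
  by rewrite adjmxM !mulmxA.
exact: hP.
Qed.

Lemma psd_add n (P Q : 'M[C]_n) : psd P -> psd Q -> psd (P + Q).
Proof.
by move=> hP hQ m D; rewrite mulmxDr mulmxDl mxtraceD addr_ge0.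
Qed.

Lemma psd_scale n (P : 'M[C]_n) c : 0 <= c -> psd P -> psd (c *: P).
Proof.
by move=> hc hP m D; rewrite -scalemxAr -scalemxAl mxtraceZ mulr_ge0.
Qed.

Lemma psd_sum n (I : finType) (Pr : pred I) (F : I -> 'M[C]_n) :
  (forall i, Pr i -> psd (F i)) -> psd (\sum_(i | Pr i) F i).
Proof.
move=> h; apply: (big_ind (@psd n)); [exact: psd0 | exact: psd_add | exact: h].
Qed.

Lemma conj_ge0_id (r : C) : 0 <= r -> (r^*)%C = r.
Proof. by move=> /ger0_real rR; rewrite -(RRe_real rR) conjc_real. Qed.

Lemma zmod_aux (V : zmodType) (a b d e : V) : a - b = a - b - (d + e) + d + e.
Proof. by rewrite -addrA addrNK. Qed.

Lemma zmod_aux2 (V : zmodType) (a b d g : V) : a - b = a - (d + g) - (b - d) + g.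
Proof. by rewrite opprB -addrA [d - b + g]addrAC -[RHS]addrA addKr. Qed.

Lemma Alemma n p (Y S : 'M[C]_n) (X : 'M[C]_(n,p)) r :
  adjmx S = S -> psd S -> 0 < r -> Y = S + r%:M ->
  [/\ Y \in unitmx, X *m adjmx X + Y \in unitmx,
      adjmx (invmx Y - invmx (X *m adjmx X + Y)) = invmx Y - invmx (X *m adjmx X + Y),
      psd (invmx Y - invmx (X *m adjmx X + Y)) &
      (\tr (invmx Y - invmx (X *m adjmx X + Y)) = 0 -> X = 0)].
Proof.
move=> hS pS r0 hY.
have hYa : adjmx Y = Y by rewrite hY adjmxD hS adjmx_scalar conj_ge0_id // ltW.
have pY : psd Y by rewrite hY; apply: psd_add => //; rewrite -scalemx1; 
  apply: psd_scale; [exact: ltW | exact: psd1].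
have ker : forall T, psd T -> (T + Y) \in unitmx.
  move=> T pT; apply: unitmx_ker => v hv.
  have : \tr (adjmx v *m (T + Y) *m v) = 0 by rewrite -mulmxA hv mulmx0 mxtrace0.
  rewrite hY !mulmxDr !mulmxDl !mxtraceD mul_mx_scalar -scalemxAl mxtraceZ.
  move/eqP; rewrite !paddr_eq0 ?addr_ge0 ?mulr_ge0 ?pT ?pS ?(ltW r0) ?tr_gram_ge0 //.
  case/and3P=> _ _; rewrite mulf_eq0 gt_eqF //= => /eqP; exact: tr_gram_eq0.
have uY : Y \in unitmx by have := ker 0 (@psd0 n); rewrite add0r.
have uZ : X *m adjmx X + Y \in unitmx by apply: ker; apply: psd_gram.
set Z := X *m adjmx X + Y in uZ *.
have hZa : adjmx Z = Z by rewrite /Z adjmxD adjmxM adjmxK hYa.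
have key : forall m (D : 'M[C]_(n,m)),
  adjmx D *m (invmx Y - invmx Z) *m D =
  adjmx (invmx Y *m D - invmx Z *m D) *m Y *m (invmx Y *m D - invmx Z *m D)
  + adjmx (adjmx X *m (invmx Z *m D)) *m (adjmx X *m (invmx Z *m D)).
  move=> m D; set U := invmx Y *m D; set W := invmx Z *m D.
  have hU : Y *m U = D by rewrite /U mulKVmx.
  have hW : Z *m W = D by rewrite /W mulKVmx.
  have hUa : adjmx U *m Y = adjmx D by rewrite -hYa -adjmxM hU.
  have hWa : adjmx W *m Z = adjmx D by rewrite -hZa -adjmxM hW.
  have e1 : adjmx D *m (invmx Y - invmx Z) *m D = adjmx D *m U - adjmx D *m W.
    by rewrite mulmxBr mulmxBl /U /W !mulmxA.
  have e2 : adjmx W *m D = adjmx W *m Y *m W + adjmx (adjmx X *m W) *m (adjmx X *m W).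
    by rewrite adjmxM adjmxK -hW /Z mulmxDl mulmxDr !mulmxA addrC.
  set G := adjmx (adjmx X *m W) *m _ in e2 *.
  rewrite e1 adjmxB mulmxBl hUa mulmxBr !mulmxBl -[adjmx W *m Y *m U]mulmxA hU e2.
  exact: zmod_aux2.
split => //.
- by rewrite adjmxB !adjmx_inv hYa hZa.
- move=> m D; rewrite key mxtraceD addr_ge0 ?tr_gram_ge0 ?pY //.
- move=> h0.
  have := key n 1%:M; rewrite adjmx1 mul1mx mulmx1 => /(congr1 mxtrace).
  rewrite h0 mxtraceD => /esym /eqP; rewrite paddr_eq0 ?tr_gram_ge0 //.
  case/andP=> _ /eqP /tr_gram_eq0; rewrite mulmx1 => hX.
  have : adjmx X = 0 by rewrite -[adjmx X](mulmxKV uZ) hX mul0mx.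
  by move/(congr1 (@adjmx R _ _)); rewrite adjmxK adjmx0.
Qed.
End PSD.
Arguments psd {R n}.
Section Quad.
Variable R : rcfType.
Local Notation C := R[i].

Lemma ReJ (z : C) : complex.Re ((z^*)%C) = complex.Re z.
Proof. by case: z. Qed.

Lemma ReMr (x : R) (z : C) : complex.Re (x%:C%C * z) = x * complex.Re z.
Proof. by case: z => a b /=; rewrite !mul0r subr0. Qed.

Lemma Re_ge0 (z : C) : 0 <= z -> 0 <= complex.Re z.
Proof. by rewrite lecE => /andP[_]. Qed.

Lemma ReD (x y : C) : complex.Re (x + y) = complex.Re x + complex.Re y.
Proof. by case: x; case: y. Qed.

Lemma ReN (x : C) : complex.Re (- x) = - complex.Re x.
Proof. by case: x. Qed.

Lemma ReB (x y : C) : complex.Re (x - y) = complex.Re x - complex.Re y.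
Proof. by rewrite ReD ReN. Qed.

Lemma Re_sum (I : finType) (P : pred I) (F : I -> C) :
  complex.Re (\sum_(i | P i) F i) = \sum_(i | P i) complex.Re (F i).
Proof. exact: (big_morph _ ReD (erefl _)). Qed.

Lemma ReC (x : R) : complex.Re (x%:C%C) = x.
Proof. by []. Qed.

Lemma trB n (A B : 'M[C]_n) : \tr (A - B) = \tr A - \tr B.
Proof. by rewrite mxtraceD -scaleN1r mxtraceZ mulN1r. Qed.

Lemma tr4 n (a b c d : 'M[C]_n) :
  complex.Re (\tr (a - b - (c - d))) =
  complex.Re (\tr a) - complex.Re (\tr b) - (complex.Re (\tr c) - complex.Re (\tr d)).
Proof. by rewrite !trB !ReB. Qed.

Lemma quad_expand n m (G : 'M[C]_n) (F Fs : 'M[C]_(n,m)) : psd G ->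
  0 <= complex.Re (\tr (adjmx F *m G *m F)) - complex.Re (\tr (adjmx F *m G *m Fs))
     - (complex.Re (\tr (adjmx Fs *m G *m F)) - complex.Re (\tr (adjmx Fs *m G *m Fs))).
Proof.
move=> pG; have := pG _ (F - Fs); move/Re_ge0.
by rewrite adjmxB !mulmxBl !mulmxBr tr4.
Qed.

Lemma quad_max n m (G : 'M[C]_n) (Fs F : 'M[C]_(n,m)) :
  adjmx G = G -> psd G ->
  2 * complex.Re (\tr (adjmx (G *m Fs) *m F)) - complex.Re (\tr (adjmx F *m G *m F)) <=
  2 * complex.Re (\tr (adjmx (G *m Fs) *m Fs)) - complex.Re (\tr (adjmx Fs *m G *m Fs)).
Proof.
move=> hG pG.
have h := @quad_expand n m G F Fs pG.
have hc : \tr (adjmx F *m G *m Fs) = ((\tr (adjmx Fs *m G *m F))^*)%C.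
  by rewrite -tr_adjmx !adjmxM adjmxK hG !mulmxA.
rewrite hc ReJ in h.
rewrite adjmxM hG.
have aux : forall a b c : R, 0 <= a - b - (b - c) -> 2 * b - a <= 2 * c - c.
  by move=> a b c H; lra.
exact: aux h.
Qed.
End Quad.
Section Main.
Variable R : realType.
Local Notation C := R[i].

Lemma adj_mxcol K Nr Nt (B : 'I_K -> 'M[C]_(Nr, Nt)) :
  adjmx (\mxcol_(k < K) B k) = \mxrow_(k < K) adjmx (B k).
Proof. by apply/matrixP => i j; rewrite !mxE. Qed.

Lemma blk_quad K Nt Nr (Hk : 'I_K -> 'M[C]_(Nr, Nt)) (Bl : 'I_K -> 'M[C]_Nr) :
  adjmx (Hstack Hk) *m \mxblock_(i < K, j < K) (if i == j then Bl i else 0 : 'M[C]_(Nr, Nr))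
    *m Hstack Hk = \sum_k adjmx (Hk k) *m Bl k *m Hk k.
Proof.
rewrite /Hstack adj_mxcol mul_mxrow_mxblock mul_mxrow_mxcol.
apply: eq_bigr => k _; congr (_ *m _).
rewrite (bigD1 k) //= eqxx big1 ?addr0 // => i /negbTE ->; by rewrite mulmx0.
Qed.

Lemma blk_col K Nt Nr Nd (Hk : 'I_K -> 'M[C]_(Nr, Nt)) (Bl : 'I_K -> 'M[C]_(Nr, Nd)) j :
  adjmx (Hstack Hk) *m submxrow (\mxblock_(i < K, j < K) (if i == j then Bl i else 0 : 'M[C]_(Nr, Nd))) j
  = adjmx (Hk j) *m Bl j.
Proof.
rewrite mul_submxrow /Hstack adj_mxcol mul_mxrow_mxblock mxrowK.
rewrite (bigD1 j) //= eqxx big1 ?addr0 // => i /negbTE ->; by rewrite mulmx0.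
Qed.

End Main.

Lemma Ahat_props (R : realType) (sigma2 PBS : R) K Nt Nr Nd (Hk : 'I_K -> 'M[R[i]]_(Nr,Nt))
  (F0 : 'I_K -> 'M[R[i]]_(\sum_(k<K) Nr, Nd)) k :
  0 < sigma2 -> 0 < PBS -> (0 < Nr)%N -> Yhat sigma2 PBS Hk F0 k \in unitmx ->
  [/\ adjmx (Ahat sigma2 PBS Hk F0 k) = Ahat sigma2 PBS Hk F0 k, psd (Ahat sigma2 PBS Hk F0 k)
    & (\tr (Ahat sigma2 PBS Hk F0 k) = 0 -> Xhat Hk F0 k = 0)].
Proof.
move=> s0 P0 Nr0 Yu.
have rho0 : 0 < rho sigma2 PBS by rewrite /rho ltcR divr_gt0.
pose E := fun j => Hbar_k Hk k *m F0 j.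
pose S := \sum_(j < K | j != k) E j *m adjmx (E j).
pose s := \sum_(i < K) \tr (Hbar Hk *m F0 i *m adjmx (F0 i)).
have hY : Yhat sigma2 PBS Hk F0 k = S + (rho sigma2 PBS * s)%:M.
  rewrite /Yhat.
  have -> : \sum_(j < K | j != k) Hbar_k Hk k *m F0 j *m adjmx (F0 j) *m adjmx (Hbar_k Hk k) = S.
    by rewrite /S; apply: eq_bigr => j _; rewrite /E /= [adjmx (_ *m F0 j)]adjmxM !mulmxA.
  by [].
have hS : adjmx S = S by rewrite /S adjmx_sum; apply: eq_bigr => j _; rewrite adjmxM adjmxK.
have pS : psd S by apply: psd_sum => j _; exact: psd_gram.
have trg : forall i, \tr (Hbar Hk *m F0 i *m adjmx (F0 i)) =
    \tr (adjmx (adjmx (Hstack Hk) *m F0 i) *m (adjmx (Hstack Hk) *m F0 i)).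
  by move=> i; rewrite adjmxM adjmxK /Hbar mxtrace_mulC !mulmxA.
have s0' : 0 <= s by rewrite /s; apply: sumr_ge0 => i _; rewrite trg tr_gram_ge0.
have r0 : 0 < rho sigma2 PBS * s.
  rewrite lt_def; apply/andP; split; last by rewrite mulr_ge0 // ltW.
  rewrite mulf_eq0 gt_eqF //=.
  apply/negP => /eqP hs0.
  have hz : forall i, adjmx (Hstack Hk) *m F0 i = 0.
    move=> i; apply: tr_gram_eq0; rewrite -trg; apply/eqP.
    move/eqP: hs0; rewrite /s psumr_eq0 => [/allP /(_ i (mem_index_enum i)) //|j _].
    by rewrite trg tr_gram_ge0.
  have hS0 : S = 0.
    rewrite /S big1 // => j _; by rewrite /E /= /Hbar_k -[Hk k *m _ *m F0 j]mulmxA hz mulmx0 mul0mx.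
  have Y0 : Yhat sigma2 PBS Hk F0 k = 0 by rewrite hY hS0 hs0 mulr0 add0r raddf0.
  move: Yu; rewrite Y0 => /mulVmx; rewrite mulmx0 => /matrixP /(_ (Ordinal Nr0) (Ordinal Nr0)).
  by rewrite !mxE eqxx /= => /eqP; rewrite eq_sym oner_eq0.
have [uY uZ hA pA trA] := @Alemma _ _ _ _ _ (Xhat Hk F0 k) _ hS pS r0 hY.
by rewrite /Ahat; split.
Qed.

Lemma sum_aux (R : realType) (I : finType) (w a b c : I -> R) :
  \sum_(i : I) w i * (a i + b i - c i) =
  \sum_(i : I) w i * a i + \sum_(i : I) w i * b i - \sum_(i : I) w i * c i.
Proof. rewrite -big_split -sumrB; apply: eq_bigr => i _ /=; ring. Qed.

Lemma re_aux (R : realType) (a b c d e : R) : a + (b + c - d - e) = a + b + c - (d + e).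
Proof. ring. Qed.

Lemma trL (R : rcfType) n m (D : 'M[R[i]]_(n,m)) (I : finType) (c : I -> R[i]) (P : I -> 'M[R[i]]_n) :
  \tr (adjmx D *m (\sum_(i : I) c i *: P i) *m D) = \sum_(i : I) c i * \tr (adjmx D *m P i *m D).
Proof.
rewrite mulmx_sumr mulmx_suml (big_morph _ (@mxtraceD _ m) (@mxtrace0 _ m)).
by apply: eq_bigr => i _; rewrite -scalemxAr -scalemxAl mxtraceZ.
Qed.

Section Obj.
Variables (R : realType) (K Nt Nr Nd : nat) (sigma2 PBS : R) (omega : 'I_K -> R)
  (Hk : 'I_K -> 'M[R[i]]_(Nr, Nt)) (F0 : 'I_K -> 'M[R[i]]_(\sum_(k < K) Nr, Nd)).
Local Notation C := R[i].
Local Notation KNr := (\sum_(k < K) Nr)%N.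

Definition Pk k : 'M[C]_KNr :=
  adjmx (Hbar_k Hk k) *m adjmx (Ahat sigma2 PBS Hk F0 k) *m Hbar_k Hk k.
Definition Mmat : 'M[C]_KNr := \sum_k (omega k)%:C%C *: Pk k.
Definition Gmat : 'M[C]_KNr := Mmat + mu sigma2 PBS omega Hk F0 *: Hbar Hk.
Definition Cj j : 'M[C]_(KNr, Nd) :=
  (omega j)%:C%C *: (adjmx (Hbar_k Hk j) *m adjmx (Bhat sigma2 PBS Hk F0 j)).
Definition c0 : R := \sum_k omega k *
  (ln (complex.Re (\det (1%:M + Bhat sigma2 PBS Hk F0 k *m Xhat Hk F0 k)))
   + complex.Re (- \tr (Bhat sigma2 PBS Hk F0 k *m Xhat Hk F0 k))).
Definition phi j (X : 'M[C]_(KNr, Nd)) : R :=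
  2 * complex.Re (\tr (adjmx (Cj j) *m X)) - complex.Re (\tr (adjmx X *m Gmat *m X)).

Lemma obj_expand F :
  objective sigma2 PBS omega Hk F0 F = c0 + \sum_j phi j (F j).
Proof.
pose S := \sum_(i < K) \tr (Hbar Hk *m F i *m adjmx (F i)).
pose Q k := \sum_(j < K) \tr (adjmx (F j) *m adjmx (Hbar_k Hk k)
       *m adjmx (Ahat sigma2 PBS Hk F0 k) *m Hbar_k Hk k *m F j).
pose a k := ln (complex.Re (\det (1%:M + Bhat sigma2 PBS Hk F0 k *m Xhat Hk F0 k)))
   + complex.Re (- \tr (Bhat sigma2 PBS Hk F0 k *m Xhat Hk F0 k)).
pose b k := 2 * complex.Re (\tr (Bhat sigma2 PBS Hk F0 k *m Hbar_k Hk k *m F k)).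
pose c k := complex.Re (Q k + rho sigma2 PBS * \tr (adjmx (Ahat sigma2 PBS Hk F0 k)) * S).
have e1 : objective sigma2 PBS omega Hk F0 F = \sum_k omega k * (a k + b k - c k).
  rewrite /objective; apply: eq_bigr => k _; congr (_ * _).
  rewrite /g_k !ReB ReD ReC /c ReD.
  exact: re_aux.
have e2 : \sum_k omega k * b k = \sum_j 2 * complex.Re (\tr (adjmx (Cj j) *m F j)).
  apply: eq_bigr => k _.
  by rewrite /b /Cj adjmxZ conjc_real adjmxM !adjmxK -scalemxAl mxtraceZ ReMr mulrCA.
have eS : S = \sum_j \tr (adjmx (F j) *m Hbar Hk *m F j).
  by apply: eq_bigr => j _; rewrite mxtrace_mulC !mulmxA.
clearbody S.
have eG : forall j, \tr (adjmx (F j) *m Gmat *m F j) =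
    \sum_k (omega k)%:C%C * \tr (adjmx (F j) *m Pk k *m F j)
    + mu sigma2 PBS omega Hk F0 * \tr (adjmx (F j) *m Hbar Hk *m F j).
  by move=> j; rewrite /Gmat mulmxDr mulmxDl mxtraceD trL -scalemxAr -scalemxAl mxtraceZ.
have e3c : \sum_k (omega k)%:C%C * (Q k + rho sigma2 PBS * \tr (adjmx (Ahat sigma2 PBS Hk F0 k)) * S)
    = \sum_j \tr (adjmx (F j) *m Gmat *m F j).
  rewrite (eq_bigr _ (fun j _ => eG j)) big_split /= exchange_big /= -mulr_sumr -eS.
  rewrite (eq_bigr _ (fun k _ => mulrDr _ _ _)) big_split /=.
  congr (_ + _).
    apply: eq_bigr => k _; rewrite mulr_sumr; apply: eq_bigr => j _.
    by rewrite /Pk !mulmxA.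
  rewrite /mu mulr_sumr mulr_suml; apply: eq_bigr => k _.
  by rewrite !mulrA [(omega k)%:C%C * rho sigma2 PBS]mulrC.
have e3 : \sum_k omega k * c k = \sum_j complex.Re (\tr (adjmx (F j) *m Gmat *m F j)).
  rewrite -Re_sum -e3c Re_sum; apply: eq_bigr => k _.
  by rewrite /c ReMr.
by rewrite e1 sum_aux e2 e3 /phi sumrB addrA.
Qed.


Lemma alg_Bcol a b c d (Hs : 'M[C]_(a,b)) (H : 'M[C]_(c,b)) (B : 'M[C]_(c,d)) (w : C) :
  Hs *m (adjmx H *m (w *: B)) = w *: (adjmx (H *m adjmx Hs) *m B).
Proof. by rewrite adjmxM adjmxK -!scalemxAr !mulmxA. Qed.

Lemma mu_ge0 : 0 < sigma2 -> 0 < PBS -> (0 < Nr)%N -> (forall k, 0 < omega k) ->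
  (forall k, Yhat sigma2 PBS Hk F0 k \in unitmx) -> 0 <= mu sigma2 PBS omega Hk F0.
Proof.
move=> s0 P0 Nr0 w0 Yu; rewrite /mu; apply: mulr_ge0.
  by rewrite /rho ler0c divr_ge0 // ltW.
apply: sumr_ge0 => k _; apply: mulr_ge0; first by rewrite ler0c ltW.
have [hA pA _] := @Ahat_props R sigma2 PBS K Nt Nr Nd Hk F0 k s0 P0 Nr0 (Yu k).
by rewrite hA; have := pA _ 1%:M; rewrite adjmx1 mul1mx mulmx1.
Qed.

Lemma Hbar_herm : adjmx (Hbar Hk) = Hbar Hk.
Proof. by rewrite /Hbar adjmxM adjmxK. Qed.

Lemma Mpsd : 0 < sigma2 -> 0 < PBS -> (0 < Nr)%N -> (forall k, 0 < omega k) ->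
  (forall k, Yhat sigma2 PBS Hk F0 k \in unitmx) -> psd Mmat.
Proof.
move=> s0 P0 Nr0 w0 Yu.
apply: psd_sum => k _; apply: psd_scale; first by rewrite ler0c ltW.
have [hAk pAk _] := @Ahat_props R sigma2 PBS K Nt Nr Nd Hk F0 k s0 P0 Nr0 (Yu k).
by rewrite /Pk hAk; apply: psd_conj.
Qed.

Lemma Gprops : 0 < sigma2 -> 0 < PBS -> (0 < Nr)%N -> (forall k, 0 < omega k) ->
  (forall k, Yhat sigma2 PBS Hk F0 k \in unitmx) -> adjmx Gmat = Gmat /\ psd Gmat.
Proof.
move=> s0 P0 Nr0 w0 Yu.
have m0 := mu_ge0 s0 P0 Nr0 w0 Yu.
have hA k := @Ahat_props R sigma2 PBS K Nt Nr Nd Hk F0 k s0 P0 Nr0 (Yu k).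
split.
  rewrite /Gmat adjmxD; congr (_ + _); last by rewrite adjmxZ (@conj_ge0_id _ _ m0) Hbar_herm.
  rewrite /Mmat adjmx_sum; apply: eq_bigr => k _.
  have [hAk _ _] := hA k.
  by rewrite adjmxZ conjc_real /Pk !adjmxM !adjmxK hAk !mulmxA.
apply: psd_add; last by apply: psd_scale => //; exact: psd_gram.
exact: Mpsd.
Qed.

Lemma Mmat_blk : Mmat = Hbar Hk *m Atilde sigma2 PBS omega Hk F0 *m Hbar Hk.
Proof.
have e : Hbar Hk *m Atilde sigma2 PBS omega Hk F0 *m Hbar Hk = Hstack Hk *m
   (adjmx (Hstack Hk) *m Atilde sigma2 PBS omega Hk F0 *m Hstack Hk) *m adjmx (Hstack Hk).
  by rewrite /Hbar !mulmxA.
rewrite e /Atilde blk_quad mulmx_sumr mulmx_suml /Mmat; apply: eq_bigr => k _.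
rewrite /Pk /Hbar_k adjmxM adjmxK.
rewrite -scalemxAr -scalemxAl -scalemxAr -scalemxAl; congr (_ *: _).
by rewrite !mulmxA.
Qed.

Lemma Bcol j : Hbar Hk *m submxrow (Btilde sigma2 PBS omega Hk F0) j = Cj j.
Proof.
rewrite /Hbar -mulmxA /Btilde blk_col /Cj.
exact: alg_Bcol.
Qed.

Lemma stat j : 0 < sigma2 -> 0 < PBS -> (0 < Nr)%N -> (forall k, 0 < omega k) ->
  (forall k, Yhat sigma2 PBS Hk F0 k \in unitmx) ->
  Gmat *m Fopt_blocks sigma2 PBS omega Hk F0 j = Cj j.
Proof.
move=> s0 P0 Nr0 w0 Yu.
have m0 := mu_ge0 s0 P0 Nr0 w0 Yu.
have hA k := @Ahat_props R sigma2 PBS K Nt Nr Nd Hk F0 k s0 P0 Nr0 (Yu k).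
pose W := (mu sigma2 PBS omega Hk F0)%:M + Atilde sigma2 PBS omega Hk F0 *m Hbar Hk.
have hG : Gmat = Hbar Hk *m W.
  by rewrite /W mulmxDr mul_mx_scalar mulmxA -Mmat_blk /Gmat addrC.
have hF : Fopt_blocks sigma2 PBS omega Hk F0 j = invmx W *m submxrow (Btilde sigma2 PBS omega Hk F0) j.
  by rewrite /Fopt_blocks /Fopt mul_submxrow.
have [mu0|mu0] := eqVneq (mu sigma2 PBS omega Hk F0) 0; last first.
  have uW : W \in unitmx.
    apply: unitmx_ker => v hv.
    have t0 : \tr (adjmx v *m Gmat *m v) = 0 by rewrite hG -!mulmxA hv !mulmx0 mxtrace0.
    have [_ pG] := Gprops s0 P0 Nr0 w0 Yu.
    move: t0; rewrite /Gmat mulmxDr mulmxDl mxtraceD -scalemxAr -scalemxAl mxtraceZ.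
    move/eqP; rewrite paddr_eq0; last first.
    - by apply: mulr_ge0 => //; apply: psd_gram.
    - exact: (Mpsd s0 P0 Nr0 w0 Yu).
    case/andP => _; rewrite mulf_eq0 (negbTE mu0) /= => /eqP.
    have -> : adjmx v *m Hbar Hk *m v =
        adjmx (adjmx (Hstack Hk) *m v) *m (adjmx (Hstack Hk) *m v).
      by rewrite adjmxM adjmxK /Hbar !mulmxA.
    move/tr_gram_eq0 => hv0.
    have : W *m v = (mu sigma2 PBS omega Hk F0) *: v.
      by rewrite /W mulmxDl mul_scalar_mx /Hbar -!mulmxA hv0 !mulmx0 addr0.
    rewrite hv => /esym/eqP; rewrite scalemx_eq0 (negbTE mu0) /=; exact/eqP.
  by rewrite hF hG -mulmxA (mulKVmx uW) Bcol.
have mu0c := mu0.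
have rho0 : rho sigma2 PBS != 0 by rewrite gt_eqF // /rho ltcR divr_gt0.
move: mu0; rewrite /mu => /eqP; rewrite mulf_eq0 (negbTE rho0) /= => /eqP/eqP.
rewrite psumr_eq0; last first.
  move=> k _; apply: mulr_ge0; first by rewrite ler0c ltW.
  have [hAk pAk _] := hA k.
  by rewrite hAk; have := pAk _ 1%:M; rewrite adjmx1 mul1mx mulmx1.
move=> /allP hall.
have X0 : forall k, Xhat Hk F0 k = 0.
  move=> k; have [hAk _ trA] := hA k; apply: trA.
  have wk : 0 < (omega k)%:C%C by rewrite ltcR.
  have := hall k (mem_index_enum k); rewrite implyTb mulf_eq0 hAk.
  by rewrite (gt_eqF wk) /= => /eqP.
have A0 : forall k, Ahat sigma2 PBS Hk F0 k = 0.
  by move=> k; rewrite /Ahat X0 adjmx0 mulmx0 add0r subrr.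
have B0 : forall k, Bhat sigma2 PBS Hk F0 k = 0.
  by move=> k; rewrite /Bhat X0 adjmx0 mul0mx.
have G0 : Gmat = 0.
  rewrite /Gmat mu0c scale0r addr0 /Mmat; apply: big1 => k _.
  by rewrite /Pk A0 adjmx0 mulmx0 mul0mx scaler0.
by rewrite G0 mul0mx /Cj B0 adjmx0 mulmx0 scaler0.
Qed.

End Obj.

Theorem theorem1 (R : realType) (K Nt Nr Nd : nat) (sigma2 PBS : R)
  (omega : 'I_K -> R) (Hk : 'I_K -> 'M[R[i]]_(Nr, Nt))
  (F0 : 'I_K -> 'M[R[i]]_(\sum_(k < K) Nr, Nd)) :
  (0 < K)%N -> (0 < Nt)%N -> (0 < Nr)%N -> (0 < Nd)%N ->
  0 < sigma2 -> 0 < PBS ->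
  (forall k, 0 < omega k) -> \sum_(k < K) omega k = 1 ->
  (forall k, Yhat sigma2 PBS Hk F0 k \in unitmx) ->
  forall F : 'I_K -> 'M[R[i]]_(\sum_(k < K) Nr, Nd),
    objective sigma2 PBS omega Hk F0 F
    <= objective sigma2 PBS omega Hk F0 (Fopt_blocks sigma2 PBS omega Hk F0).
Proof.
move=> K0 Nt0 Nr0 Nd0 s0 P0 w0 wsum Yu F.
rewrite !obj_expand lerD2l; apply: ler_sum => j _.
have [hG pG] := @Gprops R K Nt Nr Nd sigma2 PBS omega Hk F0 s0 P0 Nr0 w0 Yu.
rewrite /phi -(@stat R K Nt Nr Nd sigma2 PBS omega Hk F0 j s0 P0 Nr0 w0 Yu).
exact: quad_max.
Qed.
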